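(* Let $\mathbb{M}=(M,+)$ be a commutative monoid with identity $0$ and let $A$ be an $\mathbb{M}$-RWTA over a graded alphabet $\Sigma$. Then there exists a sequential $\mathbb{M}$-RWTA $A'$ over $\Sigma$ such that $\mathbb{P}_A=\mathbb{P}_{A'}$, i.e. $\mathbb{P}_A(t)=\mathbb{P}_{A'}(t)$ for every tree $t\in T_\Sigma$.
   Context: A graded alphabet is a finite set $\Sigma=\bigcup_{k\in\mathbb{N}}\Sigma_k$, where $\Sigma_k$ is the set of symbols of arity $k$. The set $T_\Sigma$ of trees over $\Sigma$ is defined inductively: $f(t_1,\ldots,t_k)\in T_\Sigma$ whenever $f\in\Sigma_k$ and $t_1,\ldots,t_k\in T_\Sigma$. An $\mathbb{M}$-root-weighted tree automaton ($\mathbb{M}$-RWTA) is a tuple $A=(\Sigma,Q,\nu,\delta)$ where $Q$ is a finite set of states, $\nu:Q\to M$ is the root weight function, and $\delta\subseteq\bigcup_k Q\times\Sigma_k\times Q^k$ is the transition set. Write $\delta(f,q_1,\ldots,q_k)=\{q\mid (q,f,q_1,\ldots,q_k)\in\delta\}$, and for subsets $Q_1,\ldots,Q_k\subseteq Q$, $\delta(f,Q_1,\ldots,Q_k)=\bigcup_{(q_1,\ldots,q_k)\in Q_1\times\cdots\times Q_k}\delta(f,q_1,\ldots,q_k)$. For $S\subseteq Q$ put $\nu(S)=\sum_{s\in S}\nu(s)$ (so $\nu(\emptyset)=0$). Define $\Delta:T_\Sigma\to 2^Q$ by $\Delta(f(t_1,\ldots,t_k))=\delta(f,\Delta(t_1),\ldots,\Delta(t_k))$.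 The tree series realized by $A$ is the map $\mathbb{P}_A:T_\Sigma\to M$, $\mathbb{P}_A(t)=\nu(\Delta(t))$. The RWTA $A$ is sequential if $\mathrm{Card}(\Delta(t))\le 1$ for every $t\in T_\Sigma$. *)

(* Defs.v *)
From HB Require Import structures.
From mathcomp Require Import all_boot all_order all_algebra.
Set Implicit Arguments. Unset Strict Implicit. Unset Printing Implicit Defensive.
Import GRing.Theory.
Local Open Scope ring_scope.

Section RWTA.
Variables (Sigma : finType) (ar : Sigma -> nat).

Inductive tree : Type :=
  Node (f : Sigma) of ('I_(ar f) -> tree).

Variable M : nmodType.

(* An M-root-weighted tree automaton (Sigma, Q, nu, delta):
   [delta q f qs] means (q, f, qs_1, ..., qs_k) is in the transition set. *)
Record rwta : Type := RWTA {
  state : finType;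
  rootw : state -> M;
  trans : state -> forall f : Sigma, {ffun 'I_(ar f) -> state} -> bool
}.

Variable A : rwta.

Fixpoint Delta (t : tree) : {set state A} :=
  match t with
  | Node f ts =>
      [set q | [exists qs : {ffun 'I_(ar f) -> state A},
                  [forall i, qs i \in Delta (ts i)] && trans q qs]]
  end.

Definition nuS (S : {set state A}) : M := \sum_(s in S) rootw s.

Definition series (t : tree) : M := nuS (Delta t).

Definition sequential : Prop := forall t : tree, (#|Delta t| <= 1)%N.

End RWTA.

(* Main.v *)
Require Import Defs.
From HB Require Import structures.
From mathcomp Require Import all_boot all_order all_algebra.

Section S.
Variables (Sigma : finType) (ar : Sigma -> nat) (M : nmodType) (A : rwta ar M).

Definition dstep (f : Sigma) (qs : {ffun 'I_(ar f) -> {set state A}}) : {set state A} :=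
  [set q | [exists qs0 : {ffun 'I_(ar f) -> state A},
     [forall i, qs0 i \in qs i] && trans q qs0]].

Definition detA : rwta ar M :=
  @RWTA _ ar M ({set state A} : finType) (fun S => nuS S)
    (fun S f qs => S == @dstep f qs).

Lemma Delta_det (t : tree ar) : Delta detA t = [set Delta A t].
Proof.
elim: t => f ts IH /=.
apply/setP => S; rewrite !inE.
apply/existsP/eqP.
- case=> qs /andP [/forallP H /eqP ->].
  have -> : qs = [ffun i => Delta A (ts i)].
    by apply/ffunP => i; rewrite ffunE; move: (H i); rewrite IH inE => /eqP.
  apply/setP => q; rewrite !inE; apply: eq_existsb => qs0.
  by congr (_ && _); apply: eq_forallb => i; rewrite ffunE.
- move=> ->; exists [ffun i => Delta A (ts i)]; apply/andP; split.
    by apply/forallP => i; rewrite IH ffunE inE.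
  apply/eqP/setP => q; rewrite !inE; apply: eq_existsb => qs0.
  by congr (_ && _); apply: eq_forallb => i; rewrite ffunE.
Qed.
End S.

Theorem theorem1 (Sigma : finType) (ar : Sigma -> nat) (M : nmodType)
  (A : rwta ar M) :
  exists A' : rwta ar M,
    sequential A' /\ forall t : tree ar, series A t = series A' t.
Proof.
exists (@detA _ ar M A); split.
  by move=> t; rewrite (@Delta_det _ ar M A) cards1.
move=> t; rewrite /series Delta_det /nuS big_set1 //.
Qed.
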